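(* Let $F=\{f_i\}_{i=1}^N$ be a uniform Parseval frame for an $n$-dimensional Hilbert space $\mathcal{H}_n$ and let $p>1$. Then the canonical dual $S_F^{-1}F=F$ belongs to $\zeta_{\mathfrak{F}}^{(1),p}(F)\cap\zeta_{\mathfrak{R}}^{(1),p}(F)\cap\zeta_{\mathcal{N}}^{(1),p}(F)$, and \[\mathrm{AE}_{\mathfrak{F}}^{(1),p}(F)=\mathrm{AE}_{\mathfrak{R}}^{(1),p}(F)=\mathrm{AE}_{\mathcal{N}}^{(1),p}(F)=\frac nN.\]
   Context: A uniform Parseval frame satisfies $\sum_i|\langle f,f_i\rangle|^2=\|f\|^2$ for all $f$ and has all $\|f_i\|$ equal; its frame operator is $S_F=I$. $G=\{g_i\}$ is a dual of $F$ if $f=\sum_i\langle f,f_i\rangle g_i$ for all $f$. For a dual $G$ let $E_if=\langle f,f_i\rangle g_i$ (one-erasure error operator) and define $\mathrm{AE}_{\mathfrak{F}}^{(1),p}(F,G)=\{\frac1N\sum_i\|E_i\|_{\mathfrak{F}}^p\}^{1/p}=\{\frac1N\sum_i(\|f_i\|\|g_i\|)^p\}^{1/p}$ (Frobenius norm), $\mathrm{AE}_{\mathfrak{R}}^{(1),p}(F,G)=\{\frac1N\sum_i\rho(E_i)^p\}^{1/p}=\{\frac1N\sum_i|\langle f_i,g_i\rangle|^p\}^{1/p}$ (spectral radius), and $\mathrm{AE}_{\mathcal{N}}^{(1),p}(F,G)=\{\frac1N\sum_i\omega(E_i)^p\}^{1/p}$ with $\omega(T)=\sup_{\|f\|=1}|\langle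 Tf,f\rangle|$ the numerical radius. For each $\ast\in\{\mathfrak{F},\mathfrak{R},\mathcal{N}\}$, $\mathrm{AE}_\ast^{(1),p}(F)$ is the infimum of $\mathrm{AE}_\ast^{(1),p}(F,G)$ over all duals $G$ of $F$ and $\zeta_\ast^{(1),p}(F)$ is the set of duals attaining it. *)

(* Defs.v *)
From HB Require Import structures.
From mathcomp Require Import all_boot all_order all_algebra.
From mathcomp Require Import all_classical all_reals all_analysis.
From mathcomp Require Import complex.
Set Implicit Arguments. Unset Strict Implicit. Unset Printing Implicit Defensive.
Import Order.TTheory GRing.Theory Num.Theory.
Local Open Scope ring_scope.
Local Open Scope classical_set_scope.

Section FrameDefs.
Variable R : realType.
Local Notation C := (complex R).

Definition cabs (z : C) : R := Normc.normc z.

(* inner product <f,g> = sum_k f_k * conj(g_k), linear in the first slot *)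
Definition hdot n (f g : 'cV[C]_n) : C := \sum_(k < n) f k ord0 * conjc (g k ord0).

Definition hnorm n (f : 'cV[C]_n) : R := Num.sqrt (complex.Re (hdot f f)).

Definition parseval n N (F : 'I_N -> 'cV[C]_n) : Prop :=
  forall f : 'cV[C]_n, \sum_(i < N) cabs (hdot f (F i)) ^+ 2 = hnorm f ^+ 2.

Definition uniform n N (F : 'I_N -> 'cV[C]_n) : Prop :=
  forall i j, hnorm (F i) = hnorm (F j).

Definition uniform_parseval n N (F : 'I_N -> 'cV[C]_n) : Prop :=
  parseval F /\ uniform F.

Definition is_dual n N (F G : 'I_N -> 'cV[C]_n) : Prop :=
  forall f : 'cV[C]_n, f = \sum_(i < N) hdot f (F i) *: G i.

Definition adj m n (A : 'M[C]_(m, n)) : 'M[C]_(n, m) := map_mx conjc A^T.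

(* one-erasure error operator E_i f = <f,f_i> g_i, i.e. E_i = g_i f_i^* *)
Definition erasure_op n N (F G : 'I_N -> 'cV[C]_n) (i : 'I_N) : 'M[C]_n :=
  G i *m adj (F i).

Definition frob_norm n (T : 'M[C]_n) : R :=
  Num.sqrt (\sum_(i < n) \sum_(j < n) cabs (T i j) ^+ 2).

Definition spec_radius n (T : 'M[C]_n) : R :=
  sup [set r : R | exists l : C, eigenvalue T l /\ r = cabs l].

Definition num_radius n (T : 'M[C]_n) : R :=
  sup [set r : R | exists f : 'cV[C]_n, hnorm f = 1 /\ r = cabs (hdot (T *m f) f)].

Definition AE_pair (nu : forall n, 'M[C]_n -> R) (p : R) n N
    (F G : 'I_N -> 'cV[C]_n) : R :=
  (N%:R^-1 * \sum_(i < N) (nu n (erasure_op F G i)) `^ p) `^ (p^-1).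

Definition AE_F p n N (F G : 'I_N -> 'cV[C]_n) := AE_pair frob_norm p F G.
Definition AE_R p n N (F G : 'I_N -> 'cV[C]_n) := AE_pair spec_radius p F G.
Definition AE_N p n N (F G : 'I_N -> 'cV[C]_n) := AE_pair num_radius p F G.

Definition AE_opt (nu : forall n, 'M[C]_n -> R) (p : R) n N
    (F : 'I_N -> 'cV[C]_n) : R :=
  inf [set x : R | exists G, is_dual F G /\ x = AE_pair nu p F G].

Definition zeta (nu : forall n, 'M[C]_n -> R) (p : R) n N
    (F : 'I_N -> 'cV[C]_n) : set ('I_N -> 'cV[C]_n) :=
  [set G | is_dual F G /\ AE_pair nu p F G = AE_opt nu p F].

End FrameDefs.

(* Main.v *)
Require Import Defs.
From HB Require Import structures.
From mathcomp Require Import all_boot all_order all_algebra.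
From mathcomp Require Import all_classical all_reals all_analysis.
From mathcomp Require Import complex.
From mathcomp Require Import ring lra.
Set Implicit Arguments. Unset Strict Implicit. Unset Printing Implicit Defensive.
Import Order.TTheory GRing.Theory Num.Theory.
Local Open Scope ring_scope.
Local Open Scope classical_set_scope.
Local Open Scope complex_scope.
Local Open Scope ring_scope.

Lemma sup_le_c (R : realType) (S : set R) c :
  0 <= c -> (forall y, S y -> y <= c) -> sup S <= c.
Proof.
move=> c0 H; case: (pselect (S !=set0)) => [ne|e]; first exact: ge_sup.
have -> : S = set0 by apply/seteqP; split=> x // Sx; apply: e; exists x.
by rewrite sup0.
Qed.

Lemma le_sup_c (R : realType) (S : set R) x c :
  S x -> (forall y, S y -> y <= c) -> x <= sup S.
Proof. by move=> Sx H; apply: (ub_le_sup _ Sx); exists c. Qed.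

Lemma sup_ge0_c (R : realType) (S : set R) c :
  (forall y, S y -> 0 <= y) -> (forall y, S y -> y <= c) -> 0 <= sup S.
Proof.
move=> H0 H; case: (pselect (S !=set0)) => [[x Sx]|e].
  exact: le_trans (H0 _ Sx) (le_sup_c Sx H).
have -> : S = set0 by apply/seteqP; split=> x // Sx; apply: e; exists x.
by rewrite sup0.
Qed.

Lemma inf_min (R : realType) (S : set R) m :
  S m -> (forall y, S y -> m <= y) -> inf S = m.
Proof.
move=> Sm H; apply/eqP; rewrite eq_le; apply/andP; split.
  by apply: (ge_inf _ Sm); exists m.
by apply: lb_le_inf; [exists m | ].
Qed.

Lemma cabsE (R : realType) (z : complex R) : ((cabs z)%:C)%C = `|z|. Proof. by []. Qed.

Lemma cabs_ge0 (R : realType) (z : complex R) : 0 <= cabs z.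
Proof. by case: z => a b; exact: sqrtr_ge0. Qed.

Lemma cabsM (R : realType) (z w : complex R) : cabs (z * w) = cabs z * cabs w.
Proof. exact: Normc.normcM. Qed.

Lemma cabsJ (R : realType) (z : complex R) : cabs (conjc z) = cabs z.
Proof. apply: (@complexI R); exact: normcJ. Qed.

Lemma cabs_sum (R : realType) (I : finType) (F : I -> complex R) :
  cabs (\sum_i F i) <= \sum_i cabs (F i).
Proof.
rewrite -lecR rmorph_sum /= cabsE [X in _ <= X](eq_bigr (fun i => `|F i|)) //.
exact: ler_norm_sum.
Qed.

Lemma cabs_real (R : realType) (x : R) : 0 <= x -> cabs x%:C = x.
Proof. by move=> x0; rewrite /cabs /= expr0n /= addr0 sqrtr_sqr ger0_norm. Qed.

Lemma cabs_nat (R : realType) k : cabs (k%:R : complex R) = k%:R.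
Proof. by rewrite -(rmorph_nat (real_complex R)) cabs_real. Qed.

Lemma sqr_cabsC (R : realType) (z : complex R) : ((cabs z)^+2)%:C = z * conjc z.
Proof. by rewrite rmorphXn /= sqr_normc. Qed.

Definition nrm2 (R : realType) n (f : 'cV[complex R]_n) : R :=
  \sum_k cabs (f k ord0) ^+ 2.

Lemma nrm2_ge0 (R : realType) n (f : 'cV[complex R]_n) : 0 <= nrm2 f.
Proof. by apply: sumr_ge0 => k _; rewrite sqr_ge0. Qed.

Lemma hdotff (R : realType) n (f : 'cV[complex R]_n) : hdot f f = (nrm2 f)%:C.
Proof. by rewrite /hdot /nrm2 rmorph_sum; apply: eq_bigr => k _; rewrite -sqr_cabsC. Qed.

Lemma hnorm_sq (R : realType) n (f : 'cV[complex R]_n) : hnorm f ^+ 2 = nrm2 f.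
Proof. by rewrite /hnorm hdotff /= sqr_sqrtr // nrm2_ge0. Qed.

Lemma hnormE (R : realType) n (f : 'cV[complex R]_n) : hnorm f = Num.sqrt (nrm2 f).
Proof. by rewrite /hnorm hdotff. Qed.

Lemma hdotDl (R : realType) n (f g h : 'cV[complex R]_n) :
  hdot (f + g) h = hdot f h + hdot g h.
Proof. by rewrite /hdot -big_split; apply: eq_bigr => k _; rewrite mxE mulrDl. Qed.

Lemma hdotZl (R : realType) n a (f h : 'cV[complex R]_n) :
  hdot (a *: f) h = a * hdot f h.
Proof. by rewrite /hdot mulr_sumr; apply: eq_bigr => k _; rewrite mxE mulrA. Qed.

Lemma hdotDr (R : realType) n (f g h : 'cV[complex R]_n) :
  hdot h (f + g) = hdot h f + hdot h g.
Proof. by rewrite /hdot -big_split; apply: eq_bigr => k _; rewrite mxE rmorphD mulrDr. Qed.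

Lemma hdotZr (R : realType) n a (f h : 'cV[complex R]_n) :
  hdot h (a *: f) = conjc a * hdot h f.
Proof.
by rewrite /hdot mulr_sumr; apply: eq_bigr => k _; rewrite mxE rmorphM mulrCA.
Qed.

Lemma hdotC (R : realType) n (f g : 'cV[complex R]_n) : conjc (hdot f g) = hdot g f.
Proof.
rewrite /hdot rmorph_sum; apply: eq_bigr => k _; rewrite rmorphM mulrC; congr (_ * _) => //.
by case: (g k ord0) => a b /=; rewrite opprK.
Qed.

Definition evec (R : realType) n (k : 'I_n) : 'cV[complex R]_n := delta_mx k ord0.

Lemma hdot_evec (R : realType) n (f : 'cV[complex R]_n) k :
  hdot f (evec R k) = f k ord0.
Proof.
rewrite /hdot (bigD1 k) //= big1 => [|l lk]; rewrite !mxE.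
  by rewrite !eqxx conjc1 mulr1 addr0.
by rewrite (negbTE lk) conjc0 mulr0.
Qed.

Lemma hdot_evecl (R : realType) n (f : 'cV[complex R]_n) k :
  hdot (evec R k) f = conjc (f k ord0).
Proof. by rewrite -hdotC hdot_evec. Qed.

Lemma nrm2_evec (R : realType) n k : nrm2 (evec R k : 'cV_n) = 1.
Proof.
apply: (@complexI R); rewrite -hdotff hdot_evec /evec mxE !eqxx //.
Qed.

Lemma real_CS (R : realType) (I : finType) (x y : I -> R) :
  (\sum_i x i * y i) ^+ 2 <= (\sum_i x i ^+ 2) * (\sum_i y i ^+ 2).
Proof.
have H : 0 <= \sum_i \sum_j (x i * y j - x j * y i) ^+ 2.
  by apply: sumr_ge0 => i _; apply: sumr_ge0 => j _; exact: sqr_ge0.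
have E : \sum_i \sum_j (x i * y j - x j * y i) ^+ 2 =
   \sum_i \sum_j (x i ^+ 2 * y j ^+ 2) + \sum_i \sum_j (y i ^+ 2 * x j ^+ 2)
   - \sum_i \sum_j (2 * ((x i * y i) * (x j * y j))).
  rewrite -big_split -sumrB /=; apply: eq_bigr => i _.
  rewrite -big_split -sumrB /=; apply: eq_bigr => j _; ring.
have e1 : \sum_i \sum_j (x i ^+ 2 * y j ^+ 2) = (\sum_i x i ^+ 2) * (\sum_i y i ^+ 2).
  by rewrite big_distrlr.
have e2 : \sum_i \sum_j (y i ^+ 2 * x j ^+ 2) = (\sum_i y i ^+ 2) * (\sum_i x i ^+ 2).
  by rewrite big_distrlr.
have e3 : \sum_i \sum_j (2 * ((x i * y i) * (x j * y j))) = 2 * (\sum_i x i * y i) ^+ 2.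
  rewrite expr2 big_distrlr mulr_sumr; apply: eq_bigr => i _.
  by rewrite mulr_sumr.
move: H; rewrite E e1 e2 e3 [(\sum_i y i ^+ 2) * _]mulrC.
set A := _ * _; set B := (\sum_i x i * y i) ^+ 2; lra.
Qed.

Lemma cs_hdot (R : realType) n (f g : 'cV[complex R]_n) :
  cabs (hdot f g) <= hnorm f * hnorm g.
Proof.
apply: le_trans (cabs_sum _) _.
rewrite (eq_bigr (fun k => cabs (f k ord0) * cabs (g k ord0))); last first.
  by move=> k _; rewrite cabsM cabsJ.
set Z := \sum_k _.
have Z0 : 0 <= Z by apply: sumr_ge0 => k _; rewrite mulr_ge0 ?cabs_ge0.
rewrite !hnormE -sqrtrM ?nrm2_ge0 // -(ger0_norm Z0) -sqrtr_sqr ler_sqrt.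
  exact: real_CS.
by rewrite mulr_ge0 ?nrm2_ge0.
Qed.

Lemma conjcD (R : realType) (a b : complex R) : conjc (a + b) = conjc a + conjc b.
Proof. exact: rmorphD. Qed.
Lemma conjcM (R : realType) (a b : complex R) : conjc (a * b) = conjc a * conjc b.
Proof. exact: rmorphM. Qed.
Lemma conjcc (R : realType) (a : complex R) : conjc (conjc a) = a.
Proof. by case: a => x y /=; rewrite opprK. Qed.

Lemma parsevalC (R : realType) n N (F : 'I_N -> 'cV[complex R]_n) : parseval F ->
  forall f, \sum_i hdot f (F i) * conjc (hdot f (F i)) = hdot f f.
Proof.
move=> P f; rewrite hdotff -hnorm_sq -P rmorph_sum; apply: eq_bigr => i _.
by rewrite -sqr_cabsC.
Qed.

Lemma cancel3 (R : realType) (u v p q : complex R) : u + p + v = u + q + v -> p = q.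
Proof. by move=> H; transitivity (u + p + v - u - v); [ring | rewrite H; ring]. Qed.

Lemma polar (R : realType) n N (F : 'I_N -> 'cV[complex R]_n) : parseval F ->
  forall f h, \sum_i hdot f (F i) * conjc (hdot h (F i)) = hdot f h.
Proof.
move=> P f h.
set S := \sum_i _.
set T := \sum_i hdot h (F i) * conjc (hdot f (F i)).
have Pf := parsevalC P f; have Ph := parsevalC P h.
have gen : forall c : complex R, c * conjc c = 1 ->
    conjc c * S + c * T = conjc c * hdot f h + c * hdot h f.
  move=> c cc.
  have := parsevalC P (f + c *: h).
  have -> : \sum_i hdot (f + c *: h) (F i) * conjc (hdot (f + c *: h) (F i)) =
     \sum_i hdot f (F i) * conjc (hdot f (F i)) + (conjc c * S + c * T) +
     \sum_i hdot h (F i) * conjc (hdot h (F i)).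
    rewrite /S /T !mulr_sumr -!big_split /=; apply: eq_bigr => i _.
    rewrite hdotDl hdotZl conjcD conjcM.
    transitivity (hdot f (F i) * conjc (hdot f (F i)) +
      (conjc c * (hdot f (F i) * conjc (hdot h (F i))) +
       c * (hdot h (F i) * conjc (hdot f (F i)))) +
      (c * conjc c) * (hdot h (F i) * conjc (hdot h (F i)))); first ring.
    by rewrite cc mul1r.
  rewrite Pf Ph hdotDl !hdotDr !hdotZl !hdotZr => H.
  apply: (@cancel3 _ (hdot f f) (hdot h h)); rewrite H.
  transitivity (hdot f f + (conjc c * hdot f h + c * hdot h f) + (c * conjc c) * hdot h h).
    ring.
  by rewrite cc mul1r.
have e1 := gen 1 ltac:(by rewrite conjc1 mulr1).
rewrite conjc1 !mul1r in e1.
have ci : conjc 'i%C = - 'i%C :> complex R by apply/eqP; rewrite eq_complex /= oppr0 !eqxx.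
have e2 := gen 'i%C ltac:(by rewrite ci mulrN -expr2 sqr_i opprK).
rewrite ci in e2.
have i0 : ('i%C : complex R) != 0 by rewrite eq_complex /= oner_eq0 andbF.
have e3 : T - S = hdot h f - hdot f h.
  apply: (mulfI i0); transitivity (- 'i%C * S + 'i%C * T); first ring.
  by rewrite e2; ring.
have two : (2 : complex R) != 0 by rewrite pnatr_eq0.
apply: (mulfI two); transitivity ((S + T) - (T - S)); first ring.
by rewrite e1 e3; ring.
Qed.

Lemma evec_kk (R : realType) n (k : 'I_n) : (evec R k) k ord0 = 1.
Proof. by rewrite /evec mxE !eqxx. Qed.

Lemma dual_self (R : realType) n N (F : 'I_N -> 'cV[complex R]_n) : parseval F ->
  is_dual F F.
Proof.
move=> P f; apply/matrixP => k j; rewrite (ord1 j) summxE.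
have := polar P f (evec R k); rewrite hdot_evec => <-.
by apply: eq_bigr => i _; rewrite mxE hdot_evecl conjcc.
Qed.

Lemma dual_trace (R : realType) n N (F G : 'I_N -> 'cV[complex R]_n) :
  is_dual F G -> \sum_i hdot (G i) (F i) = n%:R.
Proof.
move=> HG; rewrite /hdot exchange_big /=.
transitivity (\sum_(k < n) (1 : complex R)); last by rewrite sumr_const card_ord.
apply: eq_bigr => k _.
have := congr1 (fun M : 'cV_n => M k ord0) (HG (evec R k)).
rewrite /= summxE evec_kk => ->; apply: eq_bigr => i _.
by rewrite mxE hdot_evecl mulrC.
Qed.

Lemma sum_nrm2 (R : realType) n N (F : 'I_N -> 'cV[complex R]_n) : parseval F ->
  \sum_i nrm2 (F i) = n%:R.
Proof.
move=> P; rewrite /nrm2 exchange_big /=.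
transitivity (\sum_(k < n) (1 : R)); last by rewrite sumr_const card_ord.
apply: eq_bigr => k _.
rewrite -(nrm2_evec R k) -hnorm_sq -P; apply: eq_bigr => i _.
by rewrite hdot_evecl cabsJ.
Qed.

Lemma nrm2_uniform (R : realType) n N (F : 'I_N -> 'cV[complex R]_n) :
  uniform_parseval F -> forall i, nrm2 (F i) = n%:R / N%:R.
Proof.
move=> [P U] i.
have NN : (N%:R : R) != 0 by rewrite pnatr_eq0 -lt0n (leq_ltn_trans (leq0n i) (ltn_ord i)).
have := sum_nrm2 P.
rewrite (eq_bigr (fun=> nrm2 (F i))); last by move=> j _; rewrite -!hnorm_sq (U j i).
rewrite sumr_const card_ord => <-.
by rewrite -[_ *+ N]mulr_natr mulfK.
Qed.

Lemma rk1_entry (R : realType) n (g f : 'cV[complex R]_n) j k :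
  (g *m adj f) j k = g j ord0 * conjc (f k ord0).
Proof. by rewrite mxE big_ord1 !mxE. Qed.

Lemma adj_entry (R : realType) n (f : 'cV[complex R]_n) k :
  (adj f) ord0 k = conjc (f k ord0).
Proof. by rewrite !mxE. Qed.

Lemma adj_mul (R : realType) n (g f : 'cV[complex R]_n) :
  (adj f *m g) ord0 ord0 = hdot g f.
Proof.
by rewrite mxE /hdot; apply: eq_bigr => k _; rewrite adj_entry mulrC.
Qed.

Lemma hnorm_ge0 (R : realType) n (f : 'cV[complex R]_n) : 0 <= hnorm f.
Proof. exact: sqrtr_ge0. Qed.

Lemma frob_rk1 (R : realType) n (g f : 'cV[complex R]_n) :
  frob_norm (g *m adj f) = hnorm g * hnorm f.
Proof.
rewrite /frob_norm (eq_bigr (fun j => \sum_k cabs (g j ord0)^+2 * cabs (f k ord0)^+2)).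
  have -> : \sum_j \sum_k cabs (g j ord0)^+2 * cabs (f k ord0)^+2 = nrm2 g * nrm2 f.
    by rewrite /nrm2 big_distrlr.
  by rewrite !hnormE sqrtrM ?nrm2_ge0.
by move=> j _; apply: eq_bigr => k _; rewrite rk1_entry cabsM cabsJ exprMn.
Qed.

Lemma cabs0 (R : realType) : cabs (0 : complex R) = 0.
Proof. exact: Normc.normc0. Qed.

Lemma eig_rk1 (R : realType) n (g f : 'cV[complex R]_n) l :
  eigenvalue (g *m adj f) l -> l = 0 \/ l = hdot g f.
Proof.
move=> /eigenvalueP [v Hv v0].
set s := (v *m g) ord0 ord0.
have e : v *m (g *m adj f) = s *: adj f.
  by rewrite mulmxA {1}[v *m g]mx11_scalar mul_scalar_mx.
case: (eqVneq l 0) => [->|l0]; [by left | right].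
have vE : v = (s / l) *: adj f.
  by apply: (scalerI l0); rewrite -Hv e scalerA mulrC divfK.
have s0 : s != 0.
  apply/eqP => s0; move: v0; rewrite vE s0 mul0r scale0r eqxx //.
have sE : s = (s / l) * hdot g f.
  by rewrite {1}/s vE -scalemxAl mxE adj_mul.
have : s * l = s * hdot g f by rewrite {1}sE mulrAC divfK.
by move/(mulfI s0).
Qed.

Lemma eig_rk1_c (R : realType) n (g f : 'cV[complex R]_n) :
  hdot g f != 0 -> eigenvalue (g *m adj f) (hdot g f).
Proof.
move=> c0; apply/eigenvalueP; exists (adj f).
  by rewrite mulmxA {1}[adj f *m g]mx11_scalar mul_scalar_mx adj_mul.
apply/eqP => f0; move: c0; rewrite -adj_mul f0 mul0mx mxE eqxx //.
Qed.

Lemma spec_rk1 (R : realType) n (g f : 'cV[complex R]_n) :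
  spec_radius (g *m adj f) = cabs (hdot g f).
Proof.
have ub : forall y, [set r : R | exists l : complex R, eigenvalue (g *m adj f) l /\ r = cabs l] y ->
   y <= cabs (hdot g f).
  by move=> y [l [Hl ->]]; case: (eig_rk1 Hl) => ->; rewrite ?cabs0 ?cabs_ge0.
rewrite /spec_radius; apply/eqP; rewrite eq_le; apply/andP; split.
  exact: sup_le_c (cabs_ge0 _) ub.
case: (eqVneq (hdot g f) 0) => [->|c0].
  rewrite cabs0; apply: sup_ge0_c ub.
  by move=> y [l [_ ->]]; exact: cabs_ge0.
apply: le_sup_c ub; exists (hdot g f); split => //; exact: eig_rk1_c.
Qed.

Lemma rk1_apply (R : realType) n (g f v : 'cV[complex R]_n) :
  hdot ((g *m adj f) *m v) v = hdot v f * hdot g v.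
Proof.
rewrite {1 3}/hdot mulr_sumr; apply: eq_bigr => j _.
rewrite mxE (eq_bigr (fun k => g j ord0 * (v k ord0 * conjc (f k ord0)))); last first.
  by move=> k _; rewrite rk1_entry; ring.
rewrite -mulr_sumr; rewrite -/(hdot v f); ring.
Qed.

Lemma num_ub (R : realType) n (g f : 'cV[complex R]_n) y :
  [set r : R | exists v : 'cV[complex R]_n, hnorm v = 1 /\
      r = cabs (hdot ((g *m adj f) *m v) v)] y -> y <= hnorm f * hnorm g.
Proof.
move=> [v [Hv ->]]; rewrite rk1_apply cabsM.
apply: le_trans (ler_pM (cabs_ge0 _) (cabs_ge0 _) (cs_hdot v f) (cs_hdot g v)) _.
by rewrite Hv mul1r mulr1.
Qed.

Lemma num_rk1_le (R : realType) n (g f : 'cV[complex R]_n) :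
  num_radius (g *m adj f) <= hnorm f * hnorm g.
Proof.
apply: sup_le_c; first by rewrite mulr_ge0 ?hnorm_ge0.
exact: num_ub.
Qed.

Lemma num_rk1_ge (R : realType) n (g f : 'cV[complex R]_n) :
  cabs (hdot g f) <= num_radius (g *m adj f).
Proof.
case: (eqVneq (hdot g f) 0) => [->|c0].
  rewrite cabs0; apply: sup_ge0_c (@num_ub _ _ g f).
  by move=> y [v [_ ->]]; exact: cabs_ge0.
have hg : hnorm g != 0.
  apply/eqP => hg0; move/eqP: c0; apply; apply: Normc.eq0_normc.
  apply/le_anti; rewrite cabs_ge0 andbT; have := cs_hdot g f; rewrite hg0 mul0r //.
apply: le_sup_c (@num_ub _ _ g f).
set r := (hnorm g)^-1.
exists ((r%:C)%C *: g); split.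
  rewrite /hnorm hdotZl hdotZr hdotff conjc_real -!rmorphM /= -hnorm_sq.
  by rewrite /r mulrA -expr2 -exprMn mulVf // expr1n sqrtr1.
rewrite rk1_apply hdotZl hdotZr hdotff conjc_real -hnorm_sq.
congr cabs; symmetry.
have -> : (r%:C * hdot g f * (r%:C * (hnorm g ^+ 2)%:C))%C =
          (hdot g f * (r%:C * (r%:C * (hnorm g ^+ 2)%:C)))%C.
  set a := (r%:C)%C; set b := ((hnorm g ^+ 2)%:C)%C; ring.
rewrite -!rmorphM /= mulrA /r -expr2 -exprMn mulVf // expr1n.
by rewrite rmorph1 mulr1.
Qed.

Lemma AE_main (R : realType) n N (F : 'I_N -> 'cV[complex R]_n) (p : R)
    (nu : forall n, 'M[complex R]_n -> R) :
  uniform_parseval F -> 1 < p ->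
  (forall G i, cabs (hdot (G i) (F i)) <= nu n (erasure_op F G i)) ->
  (forall i, nu n (erasure_op F F i) = n%:R / N%:R) ->
  zeta nu p F F /\ AE_opt nu p F = n%:R / N%:R.
Proof.
move=> UP p1 Hlow Hval; have [P U] := UP.
set m := n%:R / N%:R.
have m0 : 0 <= m by rewrite divr_ge0.
have p0 : 0 < p by apply: lt_trans p1.
have AEF : AE_pair nu p F F = m.
  rewrite /AE_pair (eq_bigr (fun=> m `^ p)); last by move=> i _; rewrite Hval.
  rewrite sumr_const card_ord.
  case: (posnP N) => [N0 | Npos].
    by rewrite /m N0 invr0 mul0r mulr0 powR0 // invr_eq0 gt_eqF.
  have NN : (N%:R : R) != 0 by rewrite pnatr_eq0 -lt0n.
  rewrite -(mulr_natr (m `^ p) N) mulrCA mulVf // mulr1.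
  by rewrite -powRrM mulfV ?gt_eqF // powRr1.
have low : forall G, is_dual F G -> m <= AE_pair nu p F G.
  move=> G HG; rewrite /AE_pair.
  case: (posnP N) => [N0|Npos].
    by rewrite /m (_ : (N%:R : R) = 0) ?N0 // invr0 mulr0 powR_ge0.
  have NN : (N%:R : R) != 0 by rewrite pnatr_eq0 -lt0n.
  have Ngt0 : (0 : R) < N%:R by rewrite ltr0n.
  set a := fun i => nu n (erasure_op F G i).
  have a0 : forall i, 0 <= a i := fun i => le_trans (cabs_ge0 _) (Hlow G i).
  have suma : n%:R <= \sum_i a i.
    apply: le_trans (ler_sum _ (fun i _ => Hlow G i)).
    rewrite -(cabs_nat R n) -(dual_trace HG); exact: cabs_sum.
  set q := p / (p - 1).
  have p10 : p - 1 != 0 by rewrite subr_eq0 gt_eqF.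
  have q0 : 0 < q by rewrite divr_gt0 // subr_gt0.
  have pq : p^-1 + q^-1 = 1 by rewrite /q invf_div; field; rewrite gt_eqF.
  set b := m `^ (p - 1).
  have b0 : 0 <= b := powR_ge0 _ _.
  have bq : b `^ q = m `^ p.
    by rewrite /b -powRrM /q mulrC divfK.
  have Y : forall i, a i * b <= a i `^ p / p + m `^ p / q.
    by move=> i; rewrite -bq; apply: conjugate_powR.
  have S1 : (\sum_i a i) * b <= (\sum_i a i `^ p) / p + N%:R * (m `^ p) / q.
    rewrite mulr_suml; apply: le_trans (ler_sum _ (fun i _ => Y i)) _.
    rewrite big_split /= -mulr_suml sumr_const card_ord -(mulr_natl (m `^ p / q) N).
    by rewrite mulrA.
  have S2 : N%:R * (m `^ p) <= (\sum_i a i) * b.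
    rewrite -(mulr_powRB1 m0 p0) mulrA -/b; apply: ler_wpM2r => //.
    by rewrite /m mulrC divfK.
  have key : m `^ p <= N%:R^-1 * \sum_i a i `^ p.
    have S3 := le_trans S2 S1.
    set X := N%:R * m `^ p in S3; set S := \sum_i a i `^ p in S3 *.
    have qE : q^-1 = 1 - p^-1 by rewrite -pq; ring.
    have h : X * p^-1 <= S * p^-1.
      by move: S3; rewrite /= -!/(_ / _) qE; lra.
    rewrite ler_pM2r ?invr_gt0 // in h.
    by rewrite -(ler_pM2l Ngt0) mulrA mulfV // mul1r.
  rewrite -{1}(powRr1 m0) -[X in m `^ X](mulfV (negbT (gt_eqF p0))) powRrM.
  apply: ge0_ler_powR => //; first by rewrite invr_ge0 ltW.
    by rewrite nnegrE powR_ge0.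
  rewrite nnegrE mulr_ge0 // ?invr_ge0 ?ler0n //; apply: sumr_ge0 => i _; exact: powR_ge0.
have opt : AE_opt nu p F = m.
  apply: inf_min; first by exists F; split => //; exact: dual_self.
  by move=> y [G [HG ->]]; exact: low.
split => //; split; [exact: dual_self | by rewrite opt].
Qed.

Theorem proposition5p8 (R : realType) (n N : nat) (F : 'I_N -> 'cV[complex R]_n)
    (p : R) :
  uniform_parseval F -> 1 < p ->
  F \in (zeta (@frob_norm R) p F `&` zeta (@spec_radius R) p F
           `&` zeta (@num_radius R) p F) /\
  AE_opt (@frob_norm R) p F = n%:R / N%:R /\
  AE_opt (@spec_radius R) p F = n%:R / N%:R /\
  AE_opt (@num_radius R) p F = n%:R / N%:R.
Proof.
move=> UP p1.
have val := nrm2_uniform UP.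
have L1 : forall G i, cabs (hdot (G i) (F i)) <= frob_norm (erasure_op F G i).
  by move=> G i; rewrite /erasure_op frob_rk1; exact: cs_hdot.
have V1 : forall i, frob_norm (erasure_op F F i) = n%:R / N%:R.
  by move=> i; rewrite /erasure_op frob_rk1 -expr2 hnorm_sq val.
have L2 : forall G i, cabs (hdot (G i) (F i)) <= spec_radius (erasure_op F G i).
  by move=> G i; rewrite /erasure_op spec_rk1.
have V2 : forall i, spec_radius (erasure_op F F i) = n%:R / N%:R.
  by move=> i; rewrite /erasure_op spec_rk1 hdotff cabs_real ?nrm2_ge0 // val.
have L3 : forall G i, cabs (hdot (G i) (F i)) <= num_radius (erasure_op F G i).
  by move=> G i; exact: num_rk1_ge.
have V3 : forall i, num_radius (erasure_op F F i) = n%:R / N%:R.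
  move=> i; rewrite -(val i); apply/le_anti; apply/andP; split.
    by have := num_rk1_le (F i) (F i); rewrite -expr2 hnorm_sq.
  by have := num_rk1_ge (F i) (F i); rewrite hdotff cabs_real ?nrm2_ge0.
have [Z1 E1] := @AE_main R n N F p (@frob_norm R) UP p1 L1 V1.
have [Z2 E2] := @AE_main R n N F p (@spec_radius R) UP p1 L2 V2.
have [Z3 E3] := @AE_main R n N F p (@num_radius R) UP p1 L3 V3.
split; last by [].
by apply/mem_set; split; [split|].
Qed.
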